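(* Let $(G,+)$ be an abelian group with identity $0$. (1) Let $M$ be a (loopless) matroid over $G$. If $M$ is matched to itself, then $0\notin E(M)$. (2) If $G$ satisfies the matroid matching property, then $G$ is either torsion-free or cyclic of prime order.
   Context: A matroid over $G$ is a matroid $M$ whose finite ground set $E(M)$ is a subset of $G$; all matroids are assumed loopless, i.e. every element lies in some independent set. $r(M)$ denotes the rank of $M$. For matroids $M,N$ over $G$ with $r(M)=r(N)=n>0$ and bases $\mathcal{M}=\{a_1,\dots,a_n\}$ of $M$ and $\mathcal{N}=\{b_1,\dots,b_n\}$ of $N$, we say $\mathcal{M}$ is matched to $\mathcal{N}$ if there is a permutation $\pi\in S_n$ with $a_i+b_{\pi(i)}\notin E(M)$ for all $1\le i\le n$. $M$ is matched to $N$ if for every basis $\mathcal{M}$ of $M$ there exists a basis $\mathcal{N}$ of $N$ such that $\mathcal{M}$ is matched to $\mathcal{N}$. The group $G$ has the matroid matching property if for every two matroids $M,N$ over $G$ with $r(M)=r(N)=n>0$, $|E(M)|\le |E(N)|$ and $0\notin E(N)$, $M$ is matched to $N$. *)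

(* Defs.v *)
From HB Require Import structures.
From mathcomp Require Import all_boot all_order all_algebra.
From mathcomp Require Import finmap.
Set Implicit Arguments. Unset Strict Implicit. Unset Printing Implicit Defensive.
Import GRing.Theory.
Local Open Scope fset_scope.
Local Open Scope ring_scope.

Record matroid (G : zmodType) := Matroid {
  ground : {fset G};
  indep : {fset G} -> Prop;
  indep0 : indep fset0;
  indep_sub : forall A, indep A -> A `<=` ground;
  indep_hered : forall A B, B `<=` A -> indep A -> indep B;
  indep_exch : forall A B, indep A -> indep B -> (#|` A| < #|` B|)%N ->
     exists2 x, x \in B `\` A & indep (x |` A);
  loopless : forall x, x \in ground -> exists2 A, indep A & x \in A
}.

Definition basis (G : zmodType) (M : matroid G) (B : {fset G}) : Prop :=
  indep M B /\ (forall A, indep M A -> B `<=` A -> A = B).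

Definition has_rank (G : zmodType) (M : matroid G) (n : nat) : Prop :=
  exists2 B, basis M B & #|` B| = n.

(* basis A = {a_1..a_n} of M matched to basis B = {b_1..b_n}: there is a
   reordering t = (b_pi(1),...,b_pi(n)) of B with a_i + b_pi(i) \notin E(M). *)
Definition bases_matched (G : zmodType) (M : matroid G) (A B : {fset G}) : Prop :=
  exists t : seq G, perm_eq t (B : seq G) /\
    all2 (fun a b => a + b \notin ground M) (A : seq G) t.

Definition matched_to (G : zmodType) (M N : matroid G) : Prop :=
  forall A, basis M A -> exists2 B, basis N B & bases_matched M A B.

Definition matroid_matching_property (G : zmodType) : Prop :=
  forall (M N : matroid G) (n : nat),
    has_rank M n -> has_rank N n -> (0 < n)%N ->
    (#|` ground M| <= #|` ground N|)%N -> 0 \notin ground N ->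
    matched_to M N.

Definition torsion_free (G : zmodType) : Prop :=
  forall (x : G) (n : nat), (0 < n)%N -> x *+ n = 0 -> x = 0.

Definition cyclic_prime_order (G : zmodType) : Prop :=
  (exists g : G, forall x : G, exists k : int, x = g *~ k) /\
  (exists s : seq G, [/\ uniq s, (forall x : G, x \in s) & prime (size s)]).

(* Main.v *)
Require Import Defs.
From mathcomp Require Import all_boot all_order all_algebra.
From mathcomp Require Import finmap.
From mathcomp Require Import zify.
From Stdlib Require Import Classical.
Local Open Scope fset_scope.
Local Open Scope ring_scope.
Import GRing.Theory.

Set Implicit Arguments.
Section Helpers.
Variable G : zmodType.

Lemma all2_inl {T U : eqType} {r : T -> U -> bool} {s t a} :
  all2 r s t -> a \in s -> exists2 b, b \in t & r a b.
Proof.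
elim: s t => [|x s IH] [|y t] //= /andP[rxy h].
rewrite in_cons => /orP[/eqP->|aS]; first by exists y; rewrite ?mem_head.
by have [b bt rab] := IH _ h aS; exists b => //; rewrite in_cons bt orbT.
Qed.

Lemma all2_inr {T U : eqType} {r : T -> U -> bool} {s t b} :
  all2 r s t -> b \in t -> exists2 a, a \in s & r a b.
Proof.
elim: s t => [|x s IH] [|y t] //= /andP[rxy h].
rewrite in_cons => /orP[/eqP->|bt]; first by exists x; rewrite ?mem_head.
by have [a aS rab] := IH _ h bt; exists a => //; rewrite in_cons aS orbT.
Qed.

Lemma free_exch {E A B : {fset G}} : A `<=` E -> B `<=` E ->
  (#|` A| < #|` B|)%N -> exists2 x, x \in B `\` A & (x |` A) `<=` E.
Proof.
move=> AE BE lt.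
have : B `\` A != fset0.
  rewrite fsetD_eq0; apply/negP => BA.
  by have := fsubset_leq_card BA; rewrite leqNgt lt.
case/fset0Pn => x xBA; exists x => //.
rewrite fsubUset fsub1set AE andbT.
move: xBA; rewrite in_fsetD => /andP[_ xB].
exact: (fsubsetP BE).
Qed.

Definition free_matroid (E : {fset G}) : matroid G.
refine (@Matroid G E (fun A => A `<=` E) (fsub0set E) (fun A h => h)
  (fun A B s h => fsubset_trans s h) (fun A B hA hB lt => free_exch hA hB lt) _).
by move=> x xE; exists [fset x]; rewrite ?fsub1set ?in_fset1.
Defined.

Lemma free_basis (E : {fset G}) : basis (free_matroid E) E.
Proof.
split => //= A AE EA; apply/eqP; rewrite eqEfsubset AE EA //.
Qed.

Lemma free_basis_eq (E B : {fset G}) : basis (free_matroid E) B -> B = E.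
Proof. by case=> /= BE H; rewrite (H E). Qed.

Lemma extend_basis {M : matroid G} {A} : indep M A -> exists2 B, basis M B & A `<=` B.
Proof.
move=> iA.
have [k hk] : exists k, (#|` ground M| - #|` A| <= k)%N by eexists.
elim: k A iA hk => [|k IH] A iA hk;
  (case: (classic (basis M A)) => [bA|nbA]; [by exists A|]);
  (have [A' iA' [sA' nA']] : exists2 A', indep M A' & A `<=` A' /\ A' <> A
    by apply NNPP => H; apply nbA; split => // A' i s; apply NNPP => ne;
       apply H; exists A');
  (have lt : (#|`A| < #|`A'|)%N
    by apply: fproper_ltn_card; rewrite fproperEneq sA' andbT;
       apply/eqP => e; apply nA'; rewrite e);
  have le : (#|`A'| <= #|`ground M|)%N by apply/fsubset_leq_card/indep_sub.
- lia.
- have [B bB sB] := IH A' iA' ltac:(lia).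
  by exists B => //; exact: fsubset_trans sA' sB.
Qed.

End Helpers.
Unset Implicit Arguments.

Theorem proposition1p8 (G : zmodType) :
  (forall M : matroid G, matched_to M M -> 0 \notin ground M) /\
  (matroid_matching_property G -> torsion_free G \/ cyclic_prime_order G).
Proof.
split.
  move=> M mMM; apply/negP => z0.
  have [A iA zA] := loopless z0.
  have [B bB sB] := extend_basis iA.
  have [C bC [t [pt al]]] := mMM B bB.
  have zB : (0 : G) \in (B : seq G) by exact: (fsubsetP sB).
  have [b bt rb] := all2_inl al zB.
  have bC' : b \in C by rewrite -(perm_mem pt).
  have := fsubsetP (indep_sub (proj1 bC)) b bC'.
  by rewrite -[b]add0r (negbTE rb).
move=> mmp.
case: (classic (torsion_free G)) => [tf|ntf]; [by left|right].
have [x [n [n0 [xn x0]]]] : exists (x : G) (n : nat), (0 < n)%N /\ x *+ n = 0 /\ x <> 0.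
  apply NNPP => H; apply ntf => x n n0 xn; apply NNPP => x0; apply H.
  by exists x, n.
have ex : exists n, (0 < n)%N && (x *+ n == 0) by exists n; rewrite n0 xn eqxx.
case: (ex_minnP ex) => m /andP[m0 /eqP xm] minm.
have m1 : (1 < m)%N.
  case: m m0 xm minm => [|[|m]] //= _; rewrite mulr1n => e; by case: x0.
set p := pdiv m.
have pp : prime p := pdiv_prime m1.
have p0 : (0 < p)%N := prime_gt0 pp.
have p1 : (1 < p)%N := prime_gt1 pp.
have dpm : (p %| m)%N := pdiv_dvd m.
have mpk : (m %/ p * p)%N = m := divnK dpm.
have mp0 : (0 < m %/ p)%N by rewrite divn_gt0 // dvdn_leq.
set y := x *+ (m %/ p).
have yp : y *+ p = 0 by rewrite /y -mulrnA mpk.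
have yk : forall k, (0 < k < p)%N -> y *+ k != 0.
  move=> k /andP[k0 kp]; rewrite /y -mulrnA; apply/negP => /eqP h.
  have := minm (m %/ p * k)%N; rewrite h eqxx muln_gt0 mp0 k0 => /(_ isT).
  rewrite leqNgt -{2}mpk ltn_pmul2l //.
  by rewrite kp.
have yinj : forall i j, (i < p)%N -> (j < p)%N -> y *+ i = y *+ j -> i = j.
  have H : forall i j, (i < j < p)%N -> y *+ i != y *+ j.
    move=> i j /andP[ij jp]; apply/negP => /eqP e.
    have := yk (j - i)%N; rewrite subn_gt0 ij /=.
    have -> : (j - i < p)%N by lia.
    move=> /(_ isT); rewrite mulrnBr ?e ?subrr ?eqxx //; lia.
  move=> i j ip jp e; case: (ltngtP i j) => // c.
  - by have := H i j; rewrite c jp e eqxx => /(_ isT).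
  - by have := H j i; rewrite c ip e eqxx => /(_ isT).
set s := mkseq (fun i => y *+ i) p.
have memS : forall z, reflect (exists2 i, (i < p)%N & z = y *+ i) (z \in s).
  move=> z; apply: (iffP mapP) => [[i]|[i ip ->]].
    by rewrite mem_iota add0n => /andP[_ ip] ->; exists i.
  by exists i; rewrite // mem_iota add0n ip.
have us : uniq s.
  rewrite /s /mkseq map_inj_in_uniq ?iota_uniq // => i j.
  rewrite !mem_iota !add0n => /andP[_ ip] /andP[_ jp]; exact: yinj.
have s0 : 0 \in s by apply/memS; exists 0%N; rewrite ?mulr0n.
have sy : y \in s by apply/memS; exists 1%N; rewrite ?mulr1n.
have y0 : y != 0 by have := yk 1%N; rewrite mulr1n p1; apply.
have sclos : forall z, z \in s -> z + y \in s.
  move=> z /memS [i ip ->]; rewrite -mulrSr.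
  case: (ltngtP i.+1 p) => c.
  - by apply/memS; exists i.+1.
  - lia.
  - by rewrite c yp.
case: (classic (forall g, g \in s)) => [alls|nalls].
  split.
    exists y => g; have /memS [i ip ->] := alls g.
    by exists (Posz i); rewrite pmulrn.
  by exists s; split => //; rewrite size_mkseq.
have [g gs] : exists g, g \notin s.
  by apply NNPP => H; apply nalls => g; apply NNPP => gs; apply H; exists g; apply/negP.
set H := [fset z in s].
have inH : forall z, (z \in H) = (z \in s) by move=> z; rewrite inE.
set E' := g |` (H `\ 0).
have g0 : g != 0 by apply/eqP => e; move: gs; rewrite e s0.
have cardE : #|` E'| = #|` H|.
  rewrite /E' cardfsU1 (cardfsD1 0 H) in_fsetD1 inH (negbTE gs) andbF inH s0.
  by [].
have H0 : (0 < #|` H|)%N by rewrite (cardfsD1 0 H) inH s0.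
have rM : has_rank (free_matroid H) #|` H| by exists H => //; exact: free_basis.
have rN : has_rank (free_matroid E') #|` H| by exists E' => //; exact: free_basis.
have z0 : 0 \notin ground (free_matroid E').
  by rewrite /= /E' in_fset1U in_fsetD1 eqxx andFb orbF eq_sym.
have := mmp _ _ _ rM rN H0 (eq_leq (esym cardE)) z0 H (free_basis H).
case=> B /free_basis_eq -> [t [pt al]].
have yE : y \in E' by rewrite /E' in_fset1U in_fsetD1 y0 inH sy orbT.
have yt : y \in t by rewrite (perm_mem pt).
have [a aH ra] := all2_inr al yt.
have aS : a \in s by rewrite -inH.
by move: ra; rewrite /= inH sclos.
Qed.
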